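(* Let $(X,d)$ be a separable, zero-dimensional metric space with $d\le 1$. Then there exist a set $A\subseteq{}^\omega\omega$ and a homeomorphism $h:A\to X$ such that $d(h(x),h(y))\le d'(x,y)$ for all $x,y\in A$, where $d'$ is the usual metric on ${}^\omega\omega$. If moreover $d$ is an ultrametric, then $h$ can be chosen so that in addition $d'(h^{-1}(u),h^{-1}(v))\le 2\,d(u,v)$ for all $u,v\in X$. If $d$ is also complete, then the set $A$ can be taken to be closed in ${}^\omega\omega$.
   Context: Work in ZF plus countable choice over the reals. ${}^\omega\omega$ is the Baire space of all infinite sequences of natural numbers, with the usual ultrametric $d'(x,y)=2^{-n}$ where $n$ is least with $x(n)\ne y(n)$ (and $d'(x,x)=0$). *)

(* Defs.v *)
From Stdlib Require Import Reals Lra Lia ClassicalEpsilon.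
Open Scope R_scope.

Definition baire := nat -> nat.

(** The least index at which two sequences differ (meaningful when x <> y). *)
Definition first_diff (x y : baire) : nat :=
  epsilon (inhabits 0%nat)
    (fun n => x n <> y n /\ forall m, (m < n)%nat -> x m = y m).

Definition baire_dist (x y : baire) : R :=
  if excluded_middle_informative (x = y) then 0
  else / (2 ^ first_diff x y).

Definition is_metric {X : Type} (d : X -> X -> R) : Prop :=
  (forall x y, 0 <= d x y) /\
  (forall x y, d x y = 0 <-> x = y) /\
  (forall x y, d x y = d y x) /\
  (forall x y z, d x z <= d x y + d y z).

Definition is_ultrametric {X : Type} (d : X -> X -> R) : Prop :=
  forall x y z, d x z <= Rmax (d x y) (d y z).

Definition ball {X : Type} (d : X -> X -> R) (x : X) (e : R) : X -> Prop :=
  fun y => d x y < e.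

Definition is_open {X : Type} (d : X -> X -> R) (U : X -> Prop) : Prop :=
  forall x, U x -> exists e, 0 < e /\ forall y, ball d x e y -> U y.

Definition is_closed {X : Type} (d : X -> X -> R) (F : X -> Prop) : Prop :=
  is_open d (fun x => ~ F x).

Definition zero_dimensional {X : Type} (d : X -> X -> R) : Prop :=
  forall x e, 0 < e ->
    exists U : X -> Prop, is_open d U /\ is_closed d U /\ U x /\
      forall y, U y -> ball d x e y.

Definition countable_set {X : Type} (S : X -> Prop) : Prop :=
  exists f : X -> nat, forall x y, S x -> S y -> f x = f y -> x = y.

Definition separable {X : Type} (d : X -> X -> R) : Prop :=
  exists S : X -> Prop, countable_set S /\
    forall x e, 0 < e -> exists s, S s /\ d x s < e.

Definition cauchy {X : Type} (d : X -> X -> R) (u : nat -> X) : Prop :=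
  forall e, 0 < e -> exists N, forall m n, (N <= m)%nat -> (N <= n)%nat ->
    d (u m) (u n) < e.

Definition converges_to {X : Type} (d : X -> X -> R) (u : nat -> X) (l : X) : Prop :=
  forall e, 0 < e -> exists N, forall n, (N <= n)%nat -> d (u n) l < e.

Definition complete {X : Type} (d : X -> X -> R) : Prop :=
  forall u, cauchy d u -> exists l, converges_to d u l.

Definition continuous_on {X Y : Type} (dX : X -> X -> R) (dY : Y -> Y -> R)
  (D : X -> Prop) (f : X -> Y) : Prop :=
  forall x, D x -> forall e, 0 < e -> exists del, 0 < del /\
    forall y, D y -> dX x y < del -> dY (f x) (f y) < e.

(** h : A -> X (A ⊆ baire, as a subtype) is a homeomorphism onto X with
    inverse g : X -> A.  The subtype is used so that X may be empty. *)
Definition homeo_onto {X : Type} (d : X -> X -> R) (A : baire -> Prop)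
  (h : {a : baire | A a} -> X) (g : X -> {a : baire | A a}) : Prop :=
  (forall a, g (h a) = a) /\
  (forall u, h (g u) = u) /\
  continuous_on (fun a b : {a : baire | A a} => baire_dist (proj1_sig a) (proj1_sig b))
     d (fun _ => True) h /\
  continuous_on d (fun a b : {a : baire | A a} => baire_dist (proj1_sig a) (proj1_sig b))
     (fun _ => True) g.

Definition closed_in_baire (A : baire -> Prop) : Prop :=
  is_closed baire_dist A.

(* Main.v *)
Require Import Defs.
From Stdlib Require Import Reals Lra Lia ClassicalEpsilon Classical FunctionalExtensionality ProofIrrelevance.
From Stdlib Require Cantor ZArith.
Open Scope Z_scope. Open Scope R_scope.
Open Scope R_scope.

Lemma pow2_ge (m : nat) : INR m + 1 <= 2 ^ m.
Proof. induction m. simpl. lra. rewrite S_INR. simpl. pose proof (pos_INR m). lra. Qed.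

Lemma pow2_pos (m : nat) : 0 < 2 ^ m.
Proof. apply pow_lt; lra. Qed.

Lemma inv_pow2_small (e : R) : 0 < e -> exists m, / 2 ^ m < e.
Proof.
  intro He. destruct (archimed (/ e)) as [H1 _].
  set (k := up (/ e)) in *.
  assert (Hk : (0 <= k)%Z).
  { apply le_IZR. pose proof (Rinv_0_lt_compat e He). simpl. lra. }
  exists (Z.to_nat k).
  pose proof (pow2_ge (Z.to_nat k)). rewrite INR_IZR_INZ, Znat.Z2Nat.id in H by lia.
  pose proof (pow2_pos (Z.to_nat k)).
  apply (Rmult_lt_reg_l (2 ^ Z.to_nat k)); auto.
  rewrite Rinv_r by lra.
  apply (Rmult_lt_reg_l (/ e)). apply Rinv_0_lt_compat; auto.
  replace (/ e * (2 ^ Z.to_nat k * e)) with (2 ^ Z.to_nat k) by (field; lra). lra.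
Qed.

Lemma inv_pow2_le (m n : nat) : (m <= n)%nat -> / 2 ^ n <= / 2 ^ m.
Proof.
  intro H. apply Rinv_le_contravar. apply pow2_pos. apply Rle_pow; auto; lra.
Qed.

Lemma inv_pow2_S (n : nat) : / 2 ^ n = 2 * / 2 ^ (S n).
Proof. simpl. pose proof (pow2_pos n). field. lra. Qed.

Definition least (Q : nat -> Prop) : nat :=
  epsilon (inhabits 0%nat) (fun k => Q k /\ forall j, (j < k)%nat -> ~ Q j).

Lemma least_exists (Q : nat -> Prop) : (exists k, Q k) ->
  exists k, Q k /\ forall j, (j < k)%nat -> ~ Q j.
Proof.
  intros [k Hk]. revert Hk. induction k as [k IH] using (well_founded_induction Wf_nat.lt_wf).
  intro Hk. destruct (classic (exists j, (j < k)%nat /\ Q j)) as [[j [Hj1 Hj2]]|Hn].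
  - exact (IH j Hj1 Hj2).
  - exists k. split; auto. intros j Hj HQ. apply Hn; eauto.
Qed.

Lemma least_spec (Q : nat -> Prop) : (exists k, Q k) ->
  Q (least Q) /\ forall j, (j < least Q)%nat -> ~ Q j.
Proof. intro H. unfold least. apply epsilon_spec. now apply least_exists. Qed.

Lemma least_unique (Q : nat -> Prop) a b :
  Q a -> (forall j, (j < a)%nat -> ~ Q j) -> Q b -> (forall j, (j < b)%nat -> ~ Q j) -> a = b.
Proof.
  intros Ha Ha' Hb Hb'. destruct (Nat.lt_trichotomy a b) as [h|[h|h]].
  - exfalso; exact (Hb' a h Ha).
  - exact h.
  - exfalso; exact (Ha' b h Hb).
Qed.

Lemma first_diff_spec (x y : baire) : x <> y ->
  x (first_diff x y) <> y (first_diff x y) /\ forall m, (m < first_diff x y)%nat -> x m = y m.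
Proof.
  intro H. unfold first_diff. apply epsilon_spec.
  assert (exists n, x n <> y n).
  { apply not_all_ex_not. intro H'. apply H. apply functional_extensionality. auto. }
  destruct (least_exists _ H0) as [k [Hk1 Hk2]]. exists k. split; auto.
  intros m Hm. apply NNPP. intro. eapply Hk2; eauto.
Qed.

Lemma baire_dist_eq (x : baire) : baire_dist x x = 0.
Proof. unfold baire_dist. destruct (excluded_middle_informative (x = x)); tauto. Qed.

Lemma baire_dist_neq (x y : baire) : x <> y -> baire_dist x y = / 2 ^ first_diff x y.
Proof. intro. unfold baire_dist. destruct (excluded_middle_informative (x = y)); tauto. Qed.

Lemma baire_dist_nonneg (x y : baire) : 0 <= baire_dist x y.
Proof.
  destruct (classic (x = y)). subst; rewrite baire_dist_eq; lra.
  rewrite baire_dist_neq; auto. left. apply Rinv_0_lt_compat, pow2_pos.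
Qed.

Lemma baire_dist_agree (x y : baire) n : (forall m, (m < n)%nat -> x m = y m) ->
  baire_dist x y <= / 2 ^ n.
Proof.
  intro H. destruct (classic (x = y)). subst; rewrite baire_dist_eq.
  left; apply Rinv_0_lt_compat, pow2_pos.
  rewrite baire_dist_neq; auto. apply inv_pow2_le.
  destruct (first_diff_spec x y H0) as [H1 _].
  destruct (Compare_dec.le_lt_dec n (first_diff x y)); auto. exfalso; eauto.
Qed.

Lemma baire_dist_small (x y : baire) n : baire_dist x y < / 2 ^ n ->
  forall m, (m <= n)%nat -> x m = y m.
Proof.
  intros H m Hm. destruct (classic (x = y)). subst; auto.
  rewrite baire_dist_neq in H; auto.
  destruct (first_diff_spec x y H0) as [_ H2]. apply H2.
  destruct (Compare_dec.le_lt_dec (first_diff x y) n); [|lia].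
  pose proof (inv_pow2_le _ _ l). lra.
Qed.

Definition gA {X : Type} (c : nat -> X -> nat) : baire -> Prop :=
  fun a => exists x, (fun n => c n x) = a.
Definition gmap {X : Type} (c : nat -> X -> nat) (x : X) : {a : baire | gA c a} :=
  exist _ (fun n => c n x) (ex_intro _ x eq_refl).
Definition hmap {X : Type} (c : nat -> X -> nat) (a : {a : baire | gA c a}) : X :=
  proj1_sig (constructive_indefinite_description _ (proj2_sig a)).

Lemma hmap_spec {X : Type} (c : nat -> X -> nat) a : (fun n => c n (hmap c a)) = proj1_sig a.
Proof. unfold hmap. exact (proj2_sig (constructive_indefinite_description _ (proj2_sig a))). Qed.

Lemma zero_of_small {X : Type} (d : X -> X -> R) (Hmet : is_metric d) x y :
  (forall n, d x y <= / 2 ^ n) -> x = y.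
Proof.
  intro H. destruct Hmet as [Hp [Hz _]]. apply Hz.
  destruct (Hp x y) as [h|h]; auto. destruct (inv_pow2_small _ h) as [m Hm].
  specialize (H m). lra.
Qed.

Lemma gen_embed {X : Type} (d : X -> X -> R) (Hmet : is_metric d)
  (Hle1 : forall x y, d x y <= 1) (c : nat -> X -> nat)
  (Hi : forall n x y, c n x = c n y -> d x y <= / 2 ^ (S n))
  (Hii : forall n x, exists r, 0 < r /\ forall y, d x y < r -> c n y = c n x) :
  homeo_onto d (gA c) (hmap c) (gmap c) /\
  (forall x y, d (hmap c x) (hmap c y) <= baire_dist (proj1_sig x) (proj1_sig y)).
Proof.
  assert (Hinj : forall x y, (fun n => c n x) = (fun n => c n y) -> x = y).
  { intros x y E. apply (zero_of_small d Hmet). intro n. destruct n.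
    - simpl. rewrite Rinv_1. apply Hle1.
    - apply Hi. exact (f_equal (fun f => f n) E). }
  assert (Hlip : forall x y, d (hmap c x) (hmap c y) <= baire_dist (proj1_sig x) (proj1_sig y)).
  { intros a b. pose proof (hmap_spec c a) as Ea. pose proof (hmap_spec c b) as Eb.
    destruct (classic (proj1_sig a = proj1_sig b)) as [E|E].
    - assert (hmap c a = hmap c b) as E2 by (apply Hinj; congruence).
      rewrite E2, E, baire_dist_eq. destruct Hmet as [_ [Hz _]]. right. apply Hz; auto.
    - rewrite baire_dist_neq by auto.
      destruct (first_diff_spec _ _ E) as [_ Hag].
      destruct (first_diff (proj1_sig a) (proj1_sig b)) as [|n] eqn:Hf.
      + simpl. rewrite Rinv_1. apply Hle1.
      + apply Hi. specialize (Hag n ltac:(lia)). rewrite <- Ea, <- Eb in Hag. exact Hag. }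
  split; [|exact Hlip].
  split; [|split; [|split]].
  - intro a. apply eq_sig_hprop. intros; apply proof_irrelevance.
    simpl. apply hmap_spec.
  - intro u. apply Hinj. rewrite hmap_spec. reflexivity.
  - intros a _ e He. exists e. split; auto. intros b _ Hb.
    pose proof (Hlip a b). lra.
  - intros x _ e He. destruct (inv_pow2_small e He) as [N HN].
    assert (Hfin : forall N, exists r, 0 < r /\ forall y, d x y < r -> forall n, (n < N)%nat -> c n y = c n x).
    { clear N HN. induction N as [|N IH].
      - exists 1. split; [lra|]. intros; lia.
      - destruct IH as [r1 [Hr1 H1]]. destruct (Hii N x) as [r2 [Hr2 H2]].
        exists (Rmin r1 r2). split. apply Rmin_glb_lt; auto.
        intros y Hy n Hn. pose proof (Rmin_l r1 r2). pose proof (Rmin_r r1 r2).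
        destruct (Nat.eq_dec n N). subst. apply H2; lra. apply H1; [lra|lia]. }
    destruct (Hfin N) as [r [Hr H]]. exists r. split; auto. intros y _ Hy.
    simpl. eapply Rle_lt_trans; [|exact HN]. apply baire_dist_agree.
    intros m Hm. symmetry. apply H; auto.
Qed.

Lemma gen_ultra_extra {X : Type} (d : X -> X -> R) (Hmet : is_metric d)
  (c : nat -> X -> nat)
  (Hi : forall n x y, c n x = c n y -> d x y <= / 2 ^ (S n))
  (Hiii : forall n x y, d x y <= / 2 ^ (S n) -> c n x = c n y) :
  (forall u v, baire_dist (proj1_sig (gmap c u)) (proj1_sig (gmap c v)) <= 2 * d u v) /\
  (complete d -> closed_in_baire (gA c)).
Proof.
  split.
  - intros u v. simpl. destruct (classic ((fun n => c n u) = (fun n => c n v))) as [E|E].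
    + rewrite E, baire_dist_eq. destruct Hmet as [Hp _]. specialize (Hp u v). lra.
    + rewrite baire_dist_neq by auto. destruct (first_diff_spec _ _ E) as [Hd _].
      set (n := first_diff _ _) in *.
      assert (~ d u v <= / 2 ^ S n) by (intro h; apply Hd; apply Hiii; auto).
      rewrite inv_pow2_S. lra.
  - intros Hc a Ha.
    apply NNPP. intro Hne.
    assert (Hall : forall n, exists x, forall m, (m <= n)%nat -> c m x = a m).
    { intro n. apply NNPP. intro Hn. apply Hne. exists (/ 2 ^ n). split.
      apply Rinv_0_lt_compat, pow2_pos.
      intros b Hb Hab. destruct Hab as [x Ex]. apply Hn. exists x. intros m Hm.
      subst b. symmetry. exact (baire_dist_small _ _ _ Hb m Hm). }
    set (u := fun n => proj1_sig (constructive_indefinite_description _ (Hall n))).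
    assert (Hu : forall n m, (m <= n)%nat -> c m (u n) = a m).
    { intros n. exact (proj2_sig (constructive_indefinite_description _ (Hall n))). }
    assert (Hcau : cauchy d u).
    { intros e He. destruct (inv_pow2_small e He) as [N HN]. exists N. intros m n Hm Hn.
      eapply Rle_lt_trans; [|exact HN]. eapply Rle_trans. apply Hi.
      rewrite (Hu m N Hm), (Hu n N Hn). reflexivity. apply inv_pow2_le. lia. }
    destruct (Hc u Hcau) as [l Hl]. apply Ha. exists l.
    apply functional_extensionality. intro k.
    destruct (Hl (/ 2 ^ S k)) as [N HN]. apply Rinv_0_lt_compat, pow2_pos.
    specialize (HN (max N k) ltac:(lia)).
    rewrite <- (Hu (max N k) k ltac:(lia)). symmetry. apply Hiii. lra.
Qed.

Definition ucode {X : Type} (d : X -> X -> R) (S : X -> Prop) (f : X -> nat) (n : nat) (x : X) : nat :=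
  least (fun k => exists s, S s /\ f s = k /\ d x s <= / 2 ^ (Datatypes.S n)).

Lemma ucode_props {X : Type} (d : X -> X -> R) (Hmet : is_metric d) (Hu : is_ultrametric d)
  (S : X -> Prop) (f : X -> nat) (Hf : forall x y, S x -> S y -> f x = f y -> x = y)
  (Hd : forall x e, 0 < e -> exists s, S s /\ d x s < e) :
  (forall n x y, ucode d S f n x = ucode d S f n y -> d x y <= / 2 ^ (Datatypes.S n)) /\
  (forall n x y, d x y <= / 2 ^ (Datatypes.S n) -> ucode d S f n x = ucode d S f n y).
Proof.
  destruct Hmet as [Hp [Hz [Hs Ht]]].
  assert (Hex : forall n x, exists k, exists s, S s /\ f s = k /\ d x s <= / 2 ^ (Datatypes.S n)).
  { intros n x. destruct (Hd x (/ 2 ^ Datatypes.S n)) as [s [Ss Hxs]].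
    apply Rinv_0_lt_compat, pow2_pos. exists (f s), s. split; auto. split; auto. lra. }
  split.
  - intros n x y E. destruct (least_spec _ (Hex n x)) as [[s1 [S1 [F1 D1]]] _].
    destruct (least_spec _ (Hex n y)) as [[s2 [S2 [F2 D2]]] _].
    unfold ucode in E. assert (s1 = s2) by (apply Hf; auto; congruence). subst s2.
    eapply Rle_trans. apply (Hu x s1 y). rewrite (Hs s1 y). apply Rmax_lub; auto.
  - intros n x y Hxy.
    assert (Heq : forall k, (exists s, S s /\ f s = k /\ d x s <= / 2 ^ (Datatypes.S n)) <->
                            (exists s, S s /\ f s = k /\ d y s <= / 2 ^ (Datatypes.S n))).
    { intro k. split; intros [s [Ss [Fs Ds]]]; exists s; split; auto; split; auto.
      - eapply Rle_trans. apply (Hu y x s). rewrite Hs. apply Rmax_lub; auto.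
      - eapply Rle_trans. apply (Hu x y s). apply Rmax_lub; auto. }
    destruct (least_spec _ (Hex n x)) as [A1 A2].
    destruct (least_spec _ (Hex n y)) as [B1 B2].
    unfold ucode. eapply least_unique with (Q := fun k => exists s, S s /\ f s = k /\ d x s <= / 2 ^ (Datatypes.S n)).
    + exact A1. + exact A2. + apply Heq. exact B1.
    + intros j Hj Hq. apply (B2 j Hj). apply Heq. exact Hq.
Qed.

Definition Qk {X : Type} (d : X -> X -> R) (S : X -> Prop) (f : X -> nat) (n j m : nat) (U : X -> Prop) : Prop :=
  is_open d U /\ is_closed d U /\ exists s, S s /\ f s = j /\
    (forall y, d s y < / 2 ^ m -> U y) /\ (forall y, U y -> d s y < / 2 ^ (Datatypes.S n) / 2).

Definition Wk {X : Type} (d : X -> X -> R) (S : X -> Prop) (f : X -> nat) (n k : nat) : X -> Prop :=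
  epsilon (inhabits (fun _ : X => False)) (fun U =>
    Qk d S f n (fst (Cantor.of_nat k)) (snd (Cantor.of_nat k)) U \/
    ((forall y, ~ U y) /\ ~ exists V, Qk d S f n (fst (Cantor.of_nat k)) (snd (Cantor.of_nat k)) V)).

Lemma Wk_spec {X : Type} (d : X -> X -> R) S f n k :
    Qk d S f n (fst (Cantor.of_nat k)) (snd (Cantor.of_nat k)) (Wk d S f n k) \/
    ((forall y, ~ Wk d S f n k y) /\ ~ exists V, Qk d S f n (fst (Cantor.of_nat k)) (snd (Cantor.of_nat k)) V).
Proof.
  unfold Wk. apply epsilon_spec.
  destruct (classic (exists V, Qk d S f n (fst (Cantor.of_nat k)) (snd (Cantor.of_nat k)) V)) as [[V HV]|HN].
  - exists V; left; auto.
  - exists (fun _ => False). right. split; auto.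
Qed.

Definition pcode {X : Type} (d : X -> X -> R) (S : X -> Prop) (f : X -> nat) (n : nat) (x : X) : nat :=
  least (fun k => Wk d S f n k x).

Lemma pcode_props {X : Type} (d : X -> X -> R) (Hmet : is_metric d) (Hzd : zero_dimensional d)
  (S : X -> Prop) (f : X -> nat) (Hf : forall x y, S x -> S y -> f x = f y -> x = y)
  (Hd : forall x e, 0 < e -> exists s, S s /\ d x s < e) :
  (forall n x y, pcode d S f n x = pcode d S f n y -> d x y <= / 2 ^ (Datatypes.S n)) /\
  (forall n x, exists r, 0 < r /\ forall y, d x y < r -> pcode d S f n y = pcode d S f n x).
Proof.
  destruct Hmet as [Hp [Hz [Hs Ht]]].
  assert (Wopen : forall n k, is_open d (Wk d S f n k)).
  { intros n k. destruct (Wk_spec d S f n k) as [[H _]|[H _]]; auto.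
    intros x Hx. exfalso; eapply H; eauto. }
  assert (Wclosed : forall n k, is_closed d (Wk d S f n k)).
  { intros n k. destruct (Wk_spec d S f n k) as [[_ [H _]]|[H _]]; auto.
    intros x Hx. exists 1. split. lra. intros y _. apply H. }
  assert (Wdiam : forall n k y z, Wk d S f n k y -> Wk d S f n k z -> d y z < / 2 ^ (Datatypes.S n)).
  { intros n k y z Hy Hz'. destruct (Wk_spec d S f n k) as [[_ [_ [s [_ [_ [_ H]]]]]]|[H _]].
    - pose proof (H y Hy). pose proof (H z Hz'). pose proof (Ht y s z). rewrite (Hs y s) in *. lra.
    - exfalso; eapply H; eauto. }
  assert (Wcover : forall n x, exists k, Wk d S f n k x).
  { intros n x. set (r := / 2 ^ Datatypes.S n).
    assert (Hr : 0 < r) by (apply Rinv_0_lt_compat, pow2_pos).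
    destruct (Hzd x (r / 4)) as [U [Uo [Uc [Ux Ub]]]]. lra.
    destruct (Uo x Ux) as [rho [Hrho Hball]].
    destruct (inv_pow2_small (Rmin (rho / 2) (r / 4))) as [m Hm].
    { apply Rmin_glb_lt; lra. }
    pose proof (Rmin_l (rho / 2) (r / 4)). pose proof (Rmin_r (rho / 2) (r / 4)).
    destruct (Hd x (/ 2 ^ m)) as [s [Ss Hxs]]. apply Rinv_0_lt_compat, pow2_pos.
    exists (Cantor.to_nat (f s, m)).
    destruct (Wk_spec d S f n (Cantor.to_nat (f s, m))) as [HQ|[_ HN]];
      rewrite Cantor.cancel_of_to in *; simpl in *.
    - destruct HQ as [_ [_ [s' [Ss' [Fs' [Hin _]]]]]].
      assert (s' = s) by (apply Hf; auto). subst s'. apply Hin. rewrite Hs. exact Hxs.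
    - exfalso. apply HN. exists U. split; auto. split; auto. exists s. split; auto. split; auto.
      split.
      + intros y Hy. apply Hball. pose proof (Ht x s y). unfold ball. lra.
      + intros y Hy. pose proof (Ub y Hy). unfold ball in *. pose proof (Ht s x y).
        rewrite (Hs s x) in *. simpl. fold r. lra. }
  split.
  - intros n x y E. destruct (least_spec _ (Wcover n x)) as [H1 _].
    destruct (least_spec _ (Wcover n y)) as [H2 _].
    unfold pcode in E. rewrite E in H1. left. apply Wdiam with (k := least (fun k => Wk d S f n k y)); auto.
  - intros n x. destruct (least_spec _ (Wcover n x)) as [H1 H2].
    set (k := least (fun k => Wk d S f n k x)) in *.
    assert (Hfin : forall K, (K <= k)%nat -> exists r, 0 < r /\ forall y, d x y < r ->
                      forall j, (j < K)%nat -> ~ Wk d S f n j y).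
    { induction K as [|K IH]; intro HK.
      - exists 1. split; [lra|]. intros; lia.
      - destruct (IH ltac:(lia)) as [r1 [Hr1 Hq1]].
        destruct (Wclosed n K x (H2 K ltac:(lia))) as [r2 [Hr2 Hq2]].
        exists (Rmin r1 r2). split. apply Rmin_glb_lt; auto.
        intros y Hy j Hj. pose proof (Rmin_l r1 r2). pose proof (Rmin_r r1 r2).
        destruct (Nat.eq_dec j K). subst. apply Hq2. unfold ball; lra. apply Hq1; [lra|lia]. }
    destruct (Hfin k (le_n k)) as [r1 [Hr1 Hq1]].
    destruct (Wopen n k x H1) as [r2 [Hr2 Hq2]].
    exists (Rmin r1 r2). split. apply Rmin_glb_lt; auto.
    intros y Hy. pose proof (Rmin_l r1 r2). pose proof (Rmin_r r1 r2).
    unfold pcode. fold k. symmetry.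
    apply least_unique with (Q := fun k => Wk d S f n k y).
    + apply Hq2. unfold ball; lra.
    + apply Hq1. lra.
    + apply least_spec. exists k. apply Hq2. unfold ball; lra.
    + apply least_spec. exists k. apply Hq2. unfold ball; lra.
Qed.

Lemma ucode_ii {X : Type} (d : X -> X -> R) (c : nat -> X -> nat)
  (Hiii : forall n x y, d x y <= / 2 ^ (S n) -> c n x = c n y) :
  forall n x, exists r, 0 < r /\ forall y, d x y < r -> c n y = c n x.
Proof.
  intros n x. exists (/ 2 ^ S n). split. apply Rinv_0_lt_compat, pow2_pos.
  intros y Hy. symmetry. apply Hiii. lra.
Qed.

Theorem mainTheorem11 (X : Type) (d : X -> X -> R)
  (Hmet : is_metric d) (Hsep : separable d) (Hzd : zero_dimensional d)
  (Hle1 : forall x y, d x y <= 1) :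
  (exists (A : baire -> Prop) (h : {a : baire | A a} -> X) (g : X -> {a : baire | A a}),
      homeo_onto d A h g /\
      (forall x y, d (h x) (h y) <= baire_dist (proj1_sig x) (proj1_sig y)))
  /\
  (is_ultrametric d ->
    exists (A : baire -> Prop) (h : {a : baire | A a} -> X) (g : X -> {a : baire | A a}),
      homeo_onto d A h g /\
      (forall x y, d (h x) (h y) <= baire_dist (proj1_sig x) (proj1_sig y)) /\
      (forall u v, baire_dist (proj1_sig (g u)) (proj1_sig (g v)) <= 2 * d u v))
  /\
  (is_ultrametric d -> complete d ->
    exists (A : baire -> Prop) (h : {a : baire | A a} -> X) (g : X -> {a : baire | A a}),
      closed_in_baire A /\
      homeo_onto d A h g /\
      (forall x y, d (h x) (h y) <= baire_dist (proj1_sig x) (proj1_sig y)) /\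
      (forall u v, baire_dist (proj1_sig (g u)) (proj1_sig (g v)) <= 2 * d u v)).
Proof.
  destruct Hsep as [S [[f Hf] Hd]].
  split; [|split].
  - destruct (pcode_props d Hmet Hzd S f Hf Hd) as [Hi Hii].
    destruct (gen_embed d Hmet Hle1 _ Hi Hii) as [H1 H2].
    exists (gA (pcode d S f)), (hmap (pcode d S f)), (gmap (pcode d S f)). auto.
  - intro Hu. destruct (ucode_props d Hmet Hu S f Hf Hd) as [Hi Hiii].
    destruct (gen_embed d Hmet Hle1 _ Hi (ucode_ii d _ Hiii)) as [H1 H2].
    destruct (gen_ultra_extra d Hmet _ Hi Hiii) as [H3 _].
    exists (gA (ucode d S f)), (hmap (ucode d S f)), (gmap (ucode d S f)). auto.
  - intros Hu Hc. destruct (ucode_props d Hmet Hu S f Hf Hd) as [Hi Hiii].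
    destruct (gen_embed d Hmet Hle1 _ Hi (ucode_ii d _ Hiii)) as [H1 H2].
    destruct (gen_ultra_extra d Hmet _ Hi Hiii) as [H3 H4].
    exists (gA (ucode d S f)), (hmap (ucode d S f)), (gmap (ucode d S f)). auto.
Qed.
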